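(* There is an absolute constant $C$ such that for every odd positive integer $d$, $$\sup_{t\in(0,d^{-1/2}]}\frac{|r_d(t)|}{t}\le\frac{C}{\sqrt d}.$$
   Context: The Hermite polynomials $(H_k)_{k\ge0}$ are the orthonormal polynomials for $\mathcal{N}(0,1)$ with $\deg H_k=k$ and positive leading coefficient (the probabilist's Hermite polynomials divided by $\sqrt{k!}$). The remainder $r_d(x)$ is defined by $$H_d(x)=\exp\!\left(\frac{x^2}{4}\right)\left(\frac{2}{\pi d}\right)^{1/4}\left(\sin\!\left[\frac{1-d}{2}\pi+\sqrt d\,x\right]+r_d(x)\right).$$ *)

(* Defs.v *)
From Stdlib Require Import Reals Arith.
Open Scope R_scope.

(* Probabilist's Hermite polynomials He_k, via the standard three-term
   recurrence He_0 = 1, He_1 = x, He_{k+2} = x He_{k+1} - (k+1) He_k. *)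
Fixpoint HeP (k : nat) (x : R) : R * R :=
  (* returns (He_k x, He_{k+1} x) *)
  match k with
  | O => (1, x)
  | S k' => let (a, b) := HeP k' x in (b, x * b - INR k * a)
  end.

Definition He (k : nat) (x : R) : R := fst (HeP k x).

(* Orthonormal Hermite polynomials for N(0,1): H_k = He_k / sqrt(k!). *)
Definition H (k : nat) (x : R) : R := He k x / sqrt (INR (Factorial.fact k)).

(* The remainder r_d, solved from
   H_d(x) = exp(x^2/4) (2/(pi d))^(1/4) (sin[(1-d)/2 pi + sqrt d x] + r_d(x)). *)
Definition r (d : nat) (x : R) : R :=
  H d x / (exp (x ^ 2 / 4) * Rpower (2 / (PI * INR d)) (1 / 4))
  - sin ((1 - INR d) / 2 * PI + sqrt (INR d) * x).

(* Main.v *)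
Require Import Defs.
From Stdlib Require Import Reals Lra Lia Psatz Arith Factorial.
From Coquelicot Require Import Coquelicot.
Open Scope R_scope.

Lemma He_0 x : He 0 x = 1.
Proof. reflexivity. Qed.
Lemma He_1 x : He 1 x = x.
Proof. reflexivity. Qed.
Lemma He_SS k x : He (S (S k)) x = x * He (S k) x - INR (S k) * He k x.
Proof.
  unfold He. simpl HeP. destruct (HeP k x) as [a b]. simpl. reflexivity.
Qed.

Lemma Der_eq (f : R -> R) x l : is_derive f x l -> Derive (fun y => f y) x = l.
Proof. intro H. apply is_derive_unique. exact H. Qed.
Lemma ExD (f : R -> R) x l : is_derive f x l -> ex_derive (fun y => f y) x.
Proof. intro H. exists l. exact H. Qed.

Lemma He_deriv_pair k : (forall x, is_derive (He k) x (INR k * He (pred k) x)) /\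
   (forall x, is_derive (He (S k)) x (INR (S k) * He k x)).
Proof.
  induction k as [|k [IH1 IH2]].
  - split; intro x.
    + apply (is_derive_ext (fun _ => 1)). { intro; reflexivity. }
      auto_derive; auto. simpl; ring.
    + apply (is_derive_ext (fun y => y)). { intro; reflexivity. }
      auto_derive; auto. rewrite He_0. simpl; ring.
  - split; [exact IH2|]. intro x.
    apply (is_derive_ext (fun y => y * He (S k) y - INR (S k) * He k y)).
    { intro; rewrite He_SS; reflexivity. }
    auto_derive.
    + split; [eapply ExD; apply IH2|split; [eapply ExD; apply IH1|auto]].
    + rewrite (Der_eq _ _ _ (IH2 x)), (Der_eq _ _ _ (IH1 x)).
      destruct k as [|k].
      * simpl. rewrite He_0, He_1. ring.
      * rewrite He_SS. simpl pred. rewrite !S_INR. ring.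
Qed.

Lemma He_deriv k x : is_derive (He k) x (INR k * He (pred k) x).
Proof. apply He_deriv_pair. Qed.

Lemma He_ode d x : INR d * (INR (pred d) * He (pred (pred d)) x - x * He (pred d) x + He d x) = 0.
Proof.
  destruct d as [|[|k]].
  - simpl; ring.
  - simpl. rewrite He_1, He_0. ring.
  - simpl pred. rewrite He_SS. ring.
Qed.

Fixpoint w (m : nat) : R := match m with O => 1 | S m' => INR (2*m'+1) * w m' end.

Lemma He_at0 m : He (2*m) 0 = (-1)^m * w m /\ He (2*m+1) 0 = 0.
Proof.
  induction m as [|m [IH1 IH2]].
  - simpl. split; [rewrite He_0; ring| rewrite He_1; ring].
  - replace (2 * S m)%nat with (S (S (2*m))) by lia.
    replace (S (S (2*m)) + 1)%nat with (S (S (2*m+1))) by lia.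
    rewrite !He_SS. replace (S (2*m)) with (2*m+1)%nat by lia.
    rewrite IH2, IH1. simpl w. split; [|ring].
    replace (m + (m + 0) + 1)%nat with (2*m+1)%nat by lia. simpl pow. ring.
Qed.

Lemma isR_eq (f : R -> R) a b (l l' : R) : is_RInt f a b l -> l = l' -> is_RInt f a b l'.
Proof. intros H E; subst; exact H. Qed.

Definition Iw (n : nat) : R := RInt (fun x => sin x ^ n) 0 (PI/2).

Lemma PI2_pos : 0 < PI/2.
Proof. pose proof PI_RGT_0. lra. Qed.

Lemma Iw_ex n : ex_RInt (fun x => sin x ^ n) 0 (PI/2).
Proof.
  apply (@ex_RInt_continuous R_CompleteNormedModule). intros z _.
  apply (@ex_derive_continuous R_AbsRing R_NormedModule). auto_derive. auto.
Qed.

Lemma Iw_0 : Iw 0 = PI/2.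
Proof.
  unfold Iw. simpl. rewrite RInt_const. unfold scal; simpl. unfold mult; simpl. ring.
Qed.

Lemma Iw_1 : Iw 1 = 1.
Proof.
  unfold Iw. apply is_RInt_unique.
  apply (is_RInt_ext (fun x => sin x)). { intros; simpl; ring. }
  assert (H := @is_RInt_derive R_CompleteNormedModule (fun x => - cos x) sin 0 (PI/2)).
  replace 1 with (minus ((fun x => - cos x) (PI/2)) ((fun x => - cos x) 0)).
  2:{ simpl. rewrite cos_PI2, cos_0. unfold minus, plus, opp; simpl. ring. }
  apply H.
  - intros x _. auto_derive; auto. ring.
  - intros x _. apply continuity_pt_filterlim. apply continuity_sin.
Qed.

Lemma Iw_rec n : INR (n+2) * Iw (n+2) = INR (n+1) * Iw n.
Proof.
  assert (H : is_RInt (fun x => INR (n+2) * sin x ^ (n+2) - INR (n+1) * sin x ^ n) 0 (PI/2) 0).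
  { assert (HH := @is_RInt_derive R_CompleteNormedModule (fun x => - (sin x ^ (n+1) * cos x))
       (fun x => INR (n+2) * sin x ^ (n+2) - INR (n+1) * sin x ^ n) 0 (PI/2)).
    refine (isR_eq _ _ _ _ _ (HH _ _) _).
    3:{ simpl. rewrite cos_PI2, sin_0, pow_i by lia. unfold minus, plus, opp; simpl. ring. }
    - intros x _. auto_derive; auto.
      replace (n+2)%nat with (S (S n)) by lia. replace (n+1)%nat with (S n) by lia.
      rewrite !S_INR. simpl pow. replace (Nat.pred (S n)) with n by lia.
      pose proof (sin2_cos2 x) as H. unfold Rsqr in H. 
      assert (E: cos x * cos x = 1 - sin x * sin x) by lra.
      replace (1 * cos x * ((INR n + 1) * sin x ^ n) * cos x) with ((INR n + 1) * sin x ^ n * (cos x * cos x)) by ring.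
      rewrite E. ring.
    - intros x _. apply (@ex_derive_continuous R_AbsRing R_NormedModule). auto_derive. auto. }
  pose proof (RInt_correct _ _ _ (Iw_ex (n+2))) as H2.
  pose proof (RInt_correct _ _ _ (Iw_ex n)) as H0.
  apply (is_RInt_scal _ _ _ (INR (n+2))) in H2.
  apply (is_RInt_scal _ _ _ (INR (n+1))) in H0.
  pose proof (is_RInt_minus _ _ _ _ _ _ H2 H0) as H3.
  pose proof (is_RInt_unique _ _ _ _ H) as E1.
  pose proof (is_RInt_unique _ _ _ _ H3) as E2.
  unfold Iw. unfold minus, plus, opp, scal in E2; simpl in E2. unfold mult in E2; simpl in E2.
  assert (E3: RInt (fun x => INR (n+2) * sin x ^ (n+2) - INR (n+1) * sin x ^ n) 0 (PI/2) =
   RInt (fun y => INR (n+2) * sin y ^ (n+2) + - (INR (n+1) * sin y ^ n)) 0 (PI/2)).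
  { apply RInt_ext. intros. reflexivity. }
  lra.
Qed.

Lemma Iw_decr n : Iw (S n) <= Iw n.
Proof.
  unfold Iw. apply RInt_le. pose proof PI2_pos; lra. apply Iw_ex. apply Iw_ex.
  intros x Hx. simpl. pose proof PI_RGT_0.
  assert (0 <= sin x) by (apply sin_ge_0; lra).
  assert (sin x <= 1) by apply SIN_bound.
  assert (0 <= sin x ^ n) by (apply pow_le; lra). nra.
Qed.

Fixpoint Aw (m : nat) : R := match m with O => 1 | S m' => INR (2*m'+1) / INR (2*m'+2) * Aw m' end.
Fixpoint Bw (m : nat) : R := match m with O => 1 | S m' => INR (2*m'+2) / INR (2*m'+3) * Bw m' end.

Lemma Iw_vals m : Iw (2*m) = PI/2 * Aw m /\ Iw (2*m+1) = Bw m.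
Proof.
  induction m as [|m [IH1 IH2]].
  - simpl. rewrite Iw_0, Iw_1. split; ring.
  - split.
    + replace (2 * S m)%nat with (2*m+2)%nat by lia.
      pose proof (Iw_rec (2*m)) as H. simpl Aw. rewrite IH1 in H.
      replace (m + (m + 0) + 1)%nat with (2*m+1)%nat by lia.
      replace (m + (m + 0) + 2)%nat with (2*m+2)%nat by lia.
      assert (0 < INR (2*m+2)) by (apply lt_0_INR; lia).
      apply (Rmult_eq_reg_l (INR (2*m+2))); [|lra]. rewrite H. field. lra.
    + replace (2 * S m + 1)%nat with (2*m+1+2)%nat by lia.
      pose proof (Iw_rec (2*m+1)) as H. simpl Bw. rewrite IH2 in H.
      replace (2*m+1+1)%nat with (2*m+2)%nat in H by lia.
      replace (2*m+1+2)%nat with (2*m+3)%nat in * by lia.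
      replace (m + (m + 0) + 2)%nat with (2*m+2)%nat by lia.
      replace (m + (m + 0) + 3)%nat with (2*m+3)%nat by lia.
      assert (0 < INR (2*m+3)) by (apply lt_0_INR; lia).
      apply (Rmult_eq_reg_l (INR (2*m+3))); [|lra]. rewrite H. field. lra.
Qed.

Lemma AB m : INR (2*m+1) * Aw m * Bw m = 1.
Proof.
  induction m as [|m IH]. simpl; ring.
  change (Aw (S m)) with (INR (2*m+1) / INR (2*m+2) * Aw m).
  change (Bw (S m)) with (INR (2*m+2) / INR (2*m+3) * Bw m).
  replace (2 * S m + 1)%nat with (2*m+3)%nat by lia.
  assert (0 < INR (2*m+3)) by (apply lt_0_INR; lia).
  assert (0 < INR (2*m+2)) by (apply lt_0_INR; lia).
  rewrite <- IH. field. lra.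
Qed.

Lemma Aw_pos m : 0 < Aw m.
Proof.
  induction m; simpl. lra.
  apply Rmult_lt_0_compat; auto. apply Rdiv_lt_0_compat; apply lt_0_INR; lia.
Qed.

Lemma wallis_bounds m :
  1 <= PI/2 * INR (2*m+1) * Aw m ^ 2 <= 1 + / INR (2*m+1).
Proof.
  pose proof (Iw_decr (2*m)) as D1. pose proof (Iw_decr (2*m+1)) as D2.
  replace (S (2*m)) with (2*m+1)%nat in D1 by lia.
  replace (S (2*m+1)) with (2*(S m))%nat in D2 by lia.
  destruct (Iw_vals m) as [E1 E2]. destruct (Iw_vals (S m)) as [E3 _].
  rewrite E1, E2 in D1. rewrite E2, E3 in D2.
  change (Aw (S m)) with (INR (2*m+1) / INR (2*m+2) * Aw m) in D2.
  pose proof (AB m) as HAB. pose proof (Aw_pos m) as HA.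
  assert (Hd : 0 < INR (2*m+1)) by (apply lt_0_INR; lia).
  assert (Hd2 : INR (2*m+2) = INR (2*m+1) + 1) by (replace (2*m+2)%nat with (S (2*m+1)) by lia; apply S_INR).
  rewrite Hd2 in D2. pose proof PI_RGT_0.
  set (n := INR (2*m+1)) in *. set (a := Aw m) in *. set (b := Bw m) in *.
  split.
  - assert (n * a * b <= n * a * (PI/2 * a)) by (apply Rmult_le_compat_l; nra). nra.
  - assert (K: (n+1) * (n*a) * (PI / 2 * (n / (n + 1) * a)) <= (n+1) * (n*a) * b)
      by (apply Rmult_le_compat_l; nra).
    replace ((n+1) * (n*a) * (PI / 2 * (n / (n + 1) * a))) with (n * (PI/2 * n * a^2)) in K by (field; lra).
    replace ((n+1) * (n*a) * b) with (n+1) in K by nra.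
    apply (Rmult_le_reg_l n); auto. replace (n * (1 + /n)) with (n+1) by (field; lra). lra.
Qed.

Lemma Der_eq' (f : R -> R) x l : is_derive f x l -> Derive (fun y => f y) x = l.
Proof. intro H. apply is_derive_unique. exact H. Qed.
Lemma ExD' (f : R -> R) x l : is_derive f x l -> ex_derive (fun y => f y) x.
Proof. intro H. exists l. exact H. Qed.

Lemma key_ineq q x a b G : 1 <= q -> 0 <= x -> 0 <= a -> 0 <= b -> G <= q * x + b ->
  a * G <= q * (a^2 + q*q*b^2) + q * x^2 / 2.
Proof.
  intros. assert (a * G <= a * (q*x + b)) by (apply Rmult_le_compat_l; auto).
  assert (0 <= q*(a-x)^2) by (apply Rmult_le_pos; [lra|apply pow2_ge_0]).
  assert (a * (q*x) <= q * (a^2 + x^2)/2) by nra.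
  assert (a * b <= (a^2 + b^2)/2) by (pose proof (pow2_ge_0 (a-b)); nra).
  assert (a^2 <= q * a^2) by (assert (0 <= (q-1)*a^2) by (apply Rmult_le_pos; [lra|apply pow2_ge_0]); nra).
  assert (b^2 <= q*q*q * b^2) by (assert (0 <= (q*q*q-1)*b^2) by (apply Rmult_le_pos; [nra|apply pow2_ge_0]); nra).
  nra.
Qed.

Lemma energy (q t : R) (rr rp g : R -> R) :
  1 <= q -> 0 < t -> t <= / q ->
  (forall x, is_derive rr x (rp x)) ->
  (forall x, is_derive rp x (-(q*q) * rr x - (1/2 - x^2/4) * g x)) ->
  (forall x, 0 <= x <= t -> Rabs (g x) <= q * x + Rabs (rr x)) ->
  rr 0 = 0 -> rp 0 ^ 2 <= / (q*q) ->
  Rabs (rr t) <= 2 / q * t.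
Proof.
  intros Hq Ht Htq Drr Drp Hg H0 Hp0.
  assert (Hq0 : 0 < q) by lra.
  set (Phi := fun x => (rp x ^ 2 + q*q * rr x ^ 2) * exp (-(q*x)) - q * x^3/6).
  set (dPhi := fun x => (2 * rp x * (-(q*q) * rr x - (1/2 - x^2/4) * g x) + q*q*(2 * rr x * rp x)) * exp (-(q*x))
       - q * (rp x ^ 2 + q*q * rr x ^ 2) * exp (-(q*x)) - q * x^2/2).
  assert (DPhi : forall x, is_derive Phi x (dPhi x)).
  { intro x. unfold Phi. auto_derive.
    - repeat split; try (eapply ExD'; apply Drp); try (eapply ExD'; apply Drr).
    - rewrite (Der_eq' _ _ _ (Drp x)), (Der_eq' _ _ _ (Drr x)). unfold dPhi. cbv beta. clear dPhi Phi. field. }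
  assert (tle1 : t <= 1).
  { apply (Rle_trans _ (/q)); auto. rewrite <- Rinv_1. apply Rinv_le_contravar; lra. }
  assert (dPhi_neg : forall x, 0 <= x <= t -> dPhi x <= 0).
  { intros x Hx. unfold dPhi.
    set (e := exp (-(q*x))).
    assert (He0 : 0 < e) by apply exp_pos.
    assert (He1 : e <= 1). { unfold e. rewrite <- exp_0. apply exp_le_3 || idtac.
      destruct (Req_dec (q*x) 0) as [E|E]. rewrite E. replace (-0) with 0 by ring. lra.
      left. apply exp_increasing. nra. }
    set (k := 1/2 - x^2/4).
    assert (Hk : 0 <= k <= 1/2) by (unfold k; split; nra).
    pose proof (Hg x Hx) as HG.
    pose proof (key_ineq q x (Rabs (rp x)) (Rabs (rr x)) (Rabs (g x)) Hq (proj1 Hx)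
       (Rabs_pos _) (Rabs_pos _) HG) as KI.
    assert (- (2 * rp x * k * g x) <= Rabs (rp x) * Rabs (g x)).
    { assert (Rabs (2 * rp x * k * g x) = 2 * k * (Rabs (rp x) * Rabs (g x))).
      { rewrite !Rabs_mult. rewrite (Rabs_right 2) by lra. rewrite (Rabs_right k) by lra. ring. }
      pose proof (Rle_abs (- (2 * rp x * k * g x))) as M2. rewrite Rabs_Ropp in M2.
      assert (0 <= Rabs (rp x) * Rabs (g x)) by (apply Rmult_le_pos; apply Rabs_pos). nra. }
    assert (Ea : Rabs (rp x) ^2 = rp x ^ 2) by apply pow2_abs.
    assert (Eb : Rabs (rr x) ^2 = rr x ^ 2) by apply pow2_abs.
    rewrite Ea, Eb in KI.
    assert (0 <= q * x^2/2) by (apply Rmult_le_pos; nra).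
    replace ((2 * rp x * (- (q * q) * rr x - k * g x) + q * q * (2 * rr x * rp x)) * e -
      q * (rp x ^ 2 + q * q * rr x ^ 2) * e - q * x ^ 2 / 2)
      with ((- (2 * rp x * k * g x) - q * (rp x ^ 2 + q * q * rr x ^ 2)) * e - q * x ^ 2 / 2) by ring.
    assert ((- (2 * rp x * k * g x) - q * (rp x ^ 2 + q * q * rr x ^ 2)) <= q * x^2/2) by lra.
    nra. }
  assert (Brp : forall x, 0 <= x <= t -> rp x ^ 2 <= 4 / (q*q)).
  { intros x Hx. destruct (Req_dec x 0) as [E|E].
    - subst x. apply (Rle_trans _ _ _ Hp0). unfold Rdiv. assert (0 < /(q*q)) by (apply Rinv_0_lt_compat; nra). lra.
    - assert (Hx0 : 0 < x) by lra.
      destruct (MVT_cor2 Phi dPhi 0 x Hx0) as [c [Ec Hc]].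
      { intros c Hc. apply is_derive_Reals. apply DPhi. }
      assert (dPhi c <= 0) by (apply dPhi_neg; lra).
      assert (HP : Phi x <= Phi 0) by nra.
      unfold Phi in HP. cbv beta in HP. rewrite H0 in HP. replace (q*0) with 0 in HP by ring.
      rewrite Ropp_0, exp_0 in HP.
      assert (Hqx : q * x <= 1).
      { apply (Rmult_le_reg_l (/q)). apply Rinv_0_lt_compat; lra.
        rewrite <- Rmult_assoc, Rinv_l by lra. lra. }
      assert (Hex : exp (q*x) <= 3).
      { apply (Rle_trans _ (exp 1)). destruct Hqx as [Hl|Hl]. left; apply exp_increasing; auto.
        rewrite Hl; lra. apply exp_le_3. }
      assert (Hx3 : q * x^3 <= / (q*q)).
      { assert (0 <= q*x) by (apply Rmult_le_pos; lra).
        assert (q*x*(q*x) <= 1*1) by (apply Rmult_le_compat; lra).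
        assert (q*x*(q*x)*(q*x) <= 1*1*1) by (apply Rmult_le_compat; nra).
        apply (Rmult_le_reg_l (q*q)). nra. rewrite Rinv_r by nra. nra. }
      set (F := rp x ^ 2 + q*q*rr x^2) in *.
      assert (F * exp (-(q*x)) <= rp 0 ^2 + q * x^3/6) by lra.
      assert (F <= exp (q*x) * (rp 0 ^2 + q * x^3/6)).
      { replace F with (exp (q*x) * (F * exp (-(q*x)))).
        apply Rmult_le_compat_l. left; apply exp_pos. auto.
        rewrite <- Rmult_assoc, (Rmult_comm (exp _)), Rmult_assoc, <- exp_plus.
        replace (q*x + - (q*x)) with 0 by ring. rewrite exp_0; ring. }
      assert (Fq : 0 <= q*q*rr x ^2) by (apply Rmult_le_pos; nra).
      assert (0 < /(q*q)) by (apply Rinv_0_lt_compat; nra).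
      assert (0 <= rp 0 ^2 + q * x^3/6) by (assert (0 <= q*x^3) by (apply Rmult_le_pos; nra); nra).
      assert (exp (q*x) * (rp 0 ^2 + q * x^3/6) <= 3 * (rp 0 ^2 + q * x^3/6))
        by (apply Rmult_le_compat_r; auto).
      unfold Rdiv. unfold F in *. nra. }
  destruct (MVT_cor2 rr rp 0 t Ht) as [c [Ec Hc]].
  { intros c Hc. apply is_derive_Reals. apply Drr. }
  rewrite H0 in Ec. replace (rr t) with (rp c * t) by lra.
  rewrite Rabs_mult, (Rabs_right t) by lra.
  apply Rmult_le_compat_r; [lra|].
  pose proof (Brp c (conj (Rlt_le _ _ (proj1 Hc)) (Rlt_le _ _ (proj2 Hc)))) as B.
  assert (0 < 2/q) by (apply Rdiv_lt_0_compat; lra).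
  apply Rsqr_le_abs_0 in B || idtac.
  assert (Rabs (rp c) ^2 <= (2/q)^2).
  { rewrite pow2_abs. replace ((2/q)^2) with (4/(q*q)) by (field; lra). auto. }
  assert (0 <= Rabs (rp c)) by apply Rabs_pos. nra.
Qed.

Lemma sin_shiftm m y : sin (y - INR m * PI) = (-1)^m * sin y.
Proof.
  induction m as [|m IH]. simpl. replace (y - 0*PI) with y by ring. ring.
  rewrite S_INR. replace (y - (INR m + 1) * PI) with ((y - INR m * PI) - PI) by ring.
  rewrite sin_minus, sin_PI, cos_PI, IH. simpl pow. ring.
Qed.

Lemma cos_shiftm m y : cos (y - INR m * PI) = (-1)^m * cos y.
Proof.
  induction m as [|m IH]. simpl. replace (y - 0*PI) with y by ring. ring.
  rewrite S_INR. replace (y - (INR m + 1) * PI) with ((y - INR m * PI) - PI) by ring.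
  rewrite cos_minus, sin_PI, cos_PI, IH. simpl pow. ring.
Qed.

Lemma sin_le_id y : 0 <= y -> sin y <= y.
Proof.
  intro Hy. destruct Hy as [Hy|Hy]; [|subst; rewrite sin_0; lra].
  destruct (MVT_cor2 (fun x => x - sin x) (fun x => 1 - cos x) 0 y Hy) as [c [Ec _]].
  { intros c _. apply is_derive_Reals. auto_derive; auto. ring. }
  rewrite sin_0 in Ec. pose proof (COS_bound c). nra.
Qed.

Lemma FA m : INR (fact (2*m+1)) * Aw m = INR (2*m+1) * w m ^ 2.
Proof.
  induction m as [|m IH]. simpl; ring.
  replace (2 * S m + 1)%nat with (S (S (2*m+1))) by lia.
  change (fact (S (S (2*m+1)))) with (S (S (2*m+1)) * fact (S (2*m+1)))%nat.
  change (fact (S (2*m+1))) with (S (2*m+1) * fact (2*m+1))%nat.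
  change (Aw (S m)) with (INR (2*m+1) / INR (2*m+2) * Aw m).
  change (w (S m)) with (INR (2*m+1) * w m).
  rewrite !mult_INR.
  replace (S (2*m+1)) with (2*m+2)%nat by lia.
  assert (0 < INR (2*m+2)) by (apply lt_0_INR; lia).
  replace (INR (fact (2*m+1))) with (INR (2*m+1) * w m ^ 2 / Aw m).
  2:{ pose proof (Aw_pos m). rewrite <- IH. field. lra. }
  pose proof (Aw_pos m). field. lra.
Qed.

Lemma w_pos m : 0 < w m.
Proof. induction m; simpl. lra. apply Rmult_lt_0_compat; auto. apply lt_0_INR; lia. Qed.

Lemma Rpower4 X : 0 < X -> Rpower X (1/4) ^ 4 = X.
Proof.
  intro HX. simpl. rewrite Rmult_1_r, <- !Rpower_plus.
  replace (1/4 + (1/4 + (1/4 + 1/4))) with 1 by field. apply Rpower_1; auto.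
Qed.

Lemma yq_bound m (d : nat) (q K P : R) : d = (2*m+1)%nat -> 0 < q -> q * q = INR d ->
  0 < P -> P ^ 4 = 2 / (PI * INR d) -> K = / (sqrt (INR (fact d)) * P) ->
  (K * INR d * w m - q) ^ 2 <= / (q*q).
Proof.
  intros Hd Hq Hqq HP HP4 HK.
  pose proof (wallis_bounds m) as [Q1 Q2]. rewrite <- Hd in Q1, Q2.
  pose proof (FA m) as HF. rewrite <- Hd in HF.
  pose proof (w_pos m) as Hw. pose proof (Aw_pos m) as HA.
  assert (Hd0 : 0 < INR d) by (rewrite Hd; apply lt_0_INR; lia).
  pose proof (INR_fact_lt_0 d) as Hf.
  pose proof PI_RGT_0 as HPI.
  set (y := K * INR d * w m).
  assert (Hy : 0 < y).
  { unfold y. rewrite HK. apply Rmult_lt_0_compat; [|auto]. apply Rmult_lt_0_compat; [|auto].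
    apply Rinv_0_lt_compat. apply Rmult_lt_0_compat; auto. apply sqrt_lt_R0; auto. }
  assert (Y2 : y^2 = INR d * Aw m / P^2).
  { unfold y. rewrite HK.
    assert (Hs : sqrt (INR (fact d)) * sqrt (INR (fact d)) = INR (fact d)) by (apply sqrt_sqrt; lra).
    assert (0 < sqrt (INR (fact d))) by (apply sqrt_lt_R0; auto).
    replace ((/ (sqrt (INR (fact d)) * P) * INR d * w m) ^ 2) with
      (INR d ^2 * w m^2 / ((sqrt (INR (fact d)) * sqrt (INR (fact d))) * P^2)) by (field; repeat split; lra).
    rewrite Hs. apply (Rmult_eq_reg_r (INR (fact d) * P^2)); [|apply Rmult_integral_contrapositive_currified; [lra|apply pow_nonzero; lra]].
    field_simplify; [|lra|lra]. rewrite Rmult_assoc, HF. ring. }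
  assert (Y4 : y^4 = INR d ^ 2 * (PI/2 * INR d * Aw m ^ 2)).
  { replace (y^4) with ((y^2)^2) by ring. rewrite Y2.
    replace ((INR d * Aw m / P ^ 2) ^ 2) with (INR d ^2 * Aw m^2 / P^4) by (field; lra).
    rewrite HP4. field. split; lra. }
  set (Q := PI/2 * INR d * Aw m ^ 2) in *.
  set (z := y^2).
  assert (Hz0 : 0 <= z) by (unfold z; nra).
  assert (Hzz : z * z = y^4) by (unfold z; ring).
  assert (Z1 : INR d ^2 <= z*z) by (rewrite Hzz, Y4; nra).
  assert (Z2 : z*z <= INR d ^2 + INR d).
  { rewrite Hzz, Y4. assert (INR d^2 * Q <= INR d ^2 * (1 + / INR d)) by (apply Rmult_le_compat_l; nra).
    replace (INR d ^2 * (1 + / INR d)) with (INR d^2 + INR d) in H by (field; lra). lra. }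
  assert (Z3 : INR d <= z) by nra.
  assert (Z4 : z <= INR d + 1/2) by nra.
  assert (Y5 : q <= y) by (unfold z in *; nra).
  assert (Y6 : (y - q) * (y + q) <= 1/2) by (unfold z in *; nra).
  assert (Y7 : (y - q) * q <= 1) by nra.
  assert (Y8 : ((y-q)*q)^2 <= 1) by (assert (0 <= (y-q)*q) by nra; nra).
  apply (Rmult_le_reg_r (q*q)). nra. rewrite Rinv_l by nra. nra.
Qed.

Theorem corollaryA9 :
  exists C : R, forall d : nat, (0 < d)%nat -> Nat.odd d = true ->
    forall t : R, 0 < t -> t <= / sqrt (INR d) ->
      Rabs (r d t) / t <= C / sqrt (INR d).
Proof.
  exists 2. intros d Hd0 Hodd t Ht Htd.
  apply Nat.odd_spec in Hodd. destruct Hodd as [m Hdm].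
  assert (HdR : 1 <= INR d) by (apply (le_INR 1); lia).
  assert (Hq1 : 1 <= sqrt (INR d)) by (rewrite <- sqrt_1; apply sqrt_le_1_alt; lra).
  assert (Hqq : sqrt (INR d) * sqrt (INR d) = INR d) by (apply sqrt_sqrt; lra).
  set (P := Rpower (2 / (PI * INR d)) (1/4)).
  assert (HP : 0 < P) by (unfold P, Rpower; apply exp_pos).
  assert (HP4 : P ^ 4 = 2 / (PI * INR d)).
  { unfold P. apply Rpower4. pose proof PI_RGT_0. apply Rdiv_lt_0_compat; nra. }
  set (K := / (sqrt (INR (fact d)) * P)).
  assert (HF : 0 < sqrt (INR (fact d))) by (apply sqrt_lt_R0, INR_fact_lt_0).
  set (phi := (1 - INR d) / 2 * PI).
  assert (Hphi : phi = - (INR m * PI)).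
  { unfold phi. rewrite Hdm, plus_INR, mult_INR. simpl. field. }
  unfold r. fold P. fold phi.
  remember (sqrt (INR d)) as q eqn:Eq.
  set (g := fun x => K * He d x * exp (-(x^2/4))).
  set (rr := fun x => g x - sin (phi + q * x)).
  set (rp := fun x => K * (INR d * He (pred d) x - x/2 * He d x) * exp (-(x^2/4)) - q * cos (phi + q * x)).
  assert (Erfun : H d t / (exp (t ^ 2 / 4) * P) - sin (phi + q * t) = rr t).
  { unfold rr, g, K, H. rewrite exp_Ropp. field. repeat split; try lra.
    pose proof (exp_pos (t^2/4)); lra. }
  rewrite Erfun.
  assert (Hq0 : 0 < q) by lra.
  assert (Main : Rabs (rr t) <= 2 / q * t).
  { apply (energy q t rr rp g Hq1 Ht Htd).
    - intro x. unfold rr, g. auto_derive.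
      + repeat split; eapply ExD; apply He_deriv.
      + rewrite (Der_eq _ _ _ (He_deriv d x)). unfold rp. cbv beta. replace (x * (x * 1) * / 4) with (x^2/4) by (unfold Rdiv; ring). field.
    - intro x. unfold rp, rr, g. auto_derive.
      + repeat split; eapply ExD; apply He_deriv.
      + rewrite (Der_eq _ _ _ (He_deriv d x)), (Der_eq _ _ _ (He_deriv (pred d) x)).
        pose proof (He_ode d x) as Hode. rewrite <- Hqq in Hode |- *.
        replace (x * (x * 1) * / 4) with (x^2/4) by (unfold Rdiv; ring). apply Rminus_diag_uniq.
        transitivity (K * exp (-(x^2/4)) * (q * q * (INR (pred d) * He (pred (pred d)) x - x * He (pred d) x + He d x))).
        * field.
        * rewrite Hode. ring.
    - intros x Hx. unfold rr.
      assert (Hs : Rabs (sin (phi + q * x)) <= q * x).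
      { rewrite Hphi. replace (- (INR m * PI) + q * x) with (q * x - INR m * PI) by ring.
        rewrite sin_shiftm, Rabs_mult, pow_1_abs, Rmult_1_l.
        assert (0 <= q * x) by (apply Rmult_le_pos; lra).
        assert (q * x <= 1).
        { apply (Rmult_le_reg_l (/q)). apply Rinv_0_lt_compat; lra.
          rewrite <- Rmult_assoc, Rinv_l by lra. lra. }
        rewrite Rabs_right. apply sin_le_id; auto.
        apply Rle_ge, sin_ge_0; auto. pose proof PI2_1. pose proof PI2_Rlt_PI. lra. }
      replace (g x) with ((g x - sin (phi + q * x)) + sin (phi + q * x)) at 1 by ring.
      eapply Rle_trans. apply Rabs_triang. lra.
    - unfold rr, g. rewrite Hdm. destruct (He_at0 m) as [_ E]. rewrite E.
      rewrite Hphi. replace (- (INR m * PI) + q * 0) with (0 - INR m * PI) by ring.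
      rewrite sin_shiftm, sin_0. ring.
    - unfold rp. rewrite Hphi. replace (- (INR m * PI) + q * 0) with (0 - INR m * PI) by ring.
      rewrite cos_shiftm, cos_0.
      replace (pred d) with (2*m)%nat by lia. destruct (He_at0 m) as [E _]. rewrite E.
      replace (0 ^ 2 / 4) with 0 by (simpl; field). rewrite Ropp_0, exp_0.
      replace ((K * (INR d * ((-1) ^ m * w m) - 0 / 2 * He d 0) * 1 - q * ((-1) ^ m * 1)) ^ 2)
        with (((-1)^m)^2 * (K * INR d * w m - q) ^ 2) by (unfold Rdiv; ring).
      rewrite <- pow_mult, (Nat.mul_comm m 2), pow_mult. replace ((-1)^2) with 1 by ring.
      rewrite pow1, Rmult_1_l.
      apply (yq_bound m d q K P Hdm Hq0 Hqq HP HP4 eq_refl). }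
  unfold Rdiv. apply (Rmult_le_reg_r t); auto. rewrite Rmult_assoc, Rinv_l by lra. lra.
Qed.
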